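(* Let $\alpha_n\uparrow\infty$ and for each $n$ let $\pi_n\in\Pi^{\alpha_n}$. Then $\pi_n\to B^*:=\{e_i:1\le i\le m\}$ (i.e., the distance from $\pi_n$ to $B^*$ tends to $0$), where $e_i$ are the unit coordinate vectors of $\mathbb R^m$.
   Context: $\mathcal G=(\mathcal V,\mathcal E)$ is a directed irreducible graph with $|\mathcal V|=m>1$, $\mathcal N(i)=\{j:(i,j)\in\mathcal E\}$, with $i\in\mathcal N(i)$ for all $i$ and $j\in\mathcal N(i)\iff i\in\mathcal N(j)$; $a_{ij}=\mathbb I\{j\in\mathcal N(i)\}$. Rewards $\mu_i>0$. $\mathcal S_m$ is the unit simplex in $\mathbb R^m$. For $\alpha>0$, $f^\alpha_i(x)=(\mu_ix_i)^\alpha$, $\Psi^\alpha(x)=\frac1{2\alpha}\sum_{i,j}a_{ij}f^\alpha_i(x)f^\alpha_j(x)$, and $\Pi^\alpha:=\{\pi\in\mathcal S_m:\pi\text{ is a local maximum of }\Psi^\alpha\text{ on }\mathcal S_m\}$. *)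

(* Defs.v *)
From HB Require Import structures.
From mathcomp Require Import all_boot all_order all_algebra.
From mathcomp Require Import all_classical all_reals all_analysis.
Set Implicit Arguments. Unset Strict Implicit. Unset Printing Implicit Defensive.
Import Order.TTheory GRing.Theory Num.Theory.
Import numFieldNormedType.Exports.
Local Open Scope classical_set_scope.
Local Open Scope ring_scope.

Section Defs.
Variables (R : realType) (m : nat).

Definition simplex : set ('I_m -> R) :=
  [set x | (forall i, 0 <= x i) /\ \sum_(i < m) x i = 1].

Definition unitvec (i : 'I_m) : 'I_m -> R := fun j => (i == j)%:R.

Definition edist (x y : 'I_m -> R) : R :=
  Num.sqrt (\sum_(i < m) (x i - y i) ^+ 2).

Definition fa (mu : 'I_m -> R) (alpha : R) (x : 'I_m -> R) (i : 'I_m) : R :=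
  (mu i * x i) `^ alpha.

(* Psi^alpha(x) = 1/(2 alpha) sum_{i,j} a_ij f_i(x) f_j(x), a_ij = 1{j in N(i)} *)
Definition Psi (a : rel 'I_m) (mu : 'I_m -> R) (alpha : R) (x : 'I_m -> R) : R :=
  (2 * alpha)^-1 *
  \sum_(i < m) \sum_(j < m) (a i j)%:R * fa mu alpha x i * fa mu alpha x j.

Definition local_max_simplex (a : rel 'I_m) (mu : 'I_m -> R) (alpha : R)
    (p : 'I_m -> R) : Prop :=
  simplex p /\
  exists2 eps : R, 0 < eps &
    forall y, simplex y -> edist y p < eps -> Psi a mu alpha y <= Psi a mu alpha p.

Definition PiSet (a : rel 'I_m) (mu : 'I_m -> R) (alpha : R) : set ('I_m -> R) :=
  [set p | local_max_simplex a mu alpha p].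

Definition distB (x : 'I_m -> R) : R :=
  inf [set d | exists i : 'I_m, d = edist x (unitvec i)].

End Defs.

(* Main.v *)
Require Import Defs.
From HB Require Import structures.
From mathcomp Require Import all_boot all_order all_algebra.
From mathcomp Require Import all_classical all_reals all_analysis.
Import Order.TTheory GRing.Theory Num.Theory.
Import numFieldNormedType.Exports.
Local Open Scope classical_set_scope.
Local Open Scope ring_scope.
From mathcomp Require Import ring lra.
Lemma powR_strict (R : realType) (al c t : R) : 1 < al -> 0 < t -> t < c ->
  2 * c `^ al < (c + t) `^ al + (c - t) `^ al.
Proof.
move=> a1 t0 tc.
have c0 : 0 < c by apply: lt_trans tc.
have al0 : 0 < al by apply: lt_trans a1.
pose k := al * c `^ (al - 1).
pose psi := fun z : R => z `^ al - k * z.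
have hd (y : R) : 0 < y -> is_derive y 1 psi (al * y `^ (al - 1) - k * 1).
  by move=> y0; apply: is_deriveB; exact: is_derive1_powR.
have dpos (a b : R) : 0 < a -> {in `]a, b[, forall x, derivable psi x 1}.
  move=> a0 x; rewrite in_itv /= => /andP[ax _].
  by have [] := hd x (lt_trans a0 ax).
have cont (a b : R) : 0 < a -> {within `[a, b], continuous psi}.
  move=> a0; apply: derivable_within_continuous => x.
  rewrite in_itv /= => /andP[ax _].
  by have [] := hd x (lt_le_trans a0 ax).
have d1 (y : R) : 0 < y -> derive1 psi y = al * y `^ (al - 1) - k.
  by move=> y0; rewrite derive1E; have [_ ->] := hd y y0; rewrite mulr1.
have h1 : psi c < psi (c + t).
  apply: (gtr0_derive1_lt_cc (dpos c (c + t) c0)) => //.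
  - move=> x; rewrite in_itv /= => /andP[cx _].
    rewrite d1 ?(lt_trans c0 cx)// subr_gt0 /k ltr_pM2l//.
    by apply: gt0_ltr_powR; rewrite ?subr_gt0 // nnegrE ltW // (lt_trans c0).
  - exact: cont.
  - by rewrite in_itv /= lexx lerDl ltW.
  - by rewrite in_itv /= lerDl ltW// lexx.
  - by rewrite ltrDl.
have ct0 : 0 < c - t by rewrite subr_gt0.
have h2 : psi c < psi (c - t).
  apply: (ltr0_derive1_lt_cc (dpos (c - t) c ct0)) => //.
  - move=> x; rewrite in_itv /= => /andP[cx xc].
    rewrite d1 ?(lt_trans ct0 cx)// subr_lt0 /k ltr_pM2l//.
    by apply: gt0_ltr_powR; rewrite ?subr_gt0 // nnegrE ltW // (lt_trans ct0).
  - exact: cont.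
  - by rewrite in_itv /= gerBl ltW// lexx.
  - by rewrite in_itv /= lexx gerBl ltW.
  - by rewrite gtrBl.
move: h1 h2; rewrite /psi => h1 h2.
have e2 : k * (c + t) + k * (c - t) = 2 * (k * c) by ring.
move: h1 h2 e2; clearbody k; clear.
set A := _ `^ al; set B := _ `^ al; set C := _ `^ al.
move=> h1 h2 e2; lra.
Qed.
Lemma pair_sum (R : realType) (m : nat) (i j : 'I_m) (g : 'I_m -> R) :
  i != j -> (forall k, k != i -> k != j -> g k = 0) ->
  \sum_(k < m) g k = g i + g j.
Proof.
move=> ij hg; rewrite (bigD1 i) //= (bigD1 j) /=; last by rewrite eq_sym.
rewrite big1 ?addr0 // => k /andP[ki kj]; exact: hg.
Qed.

Definition GG (R : realType) (m : nat) (a : rel 'I_m) (v : 'I_m -> R) : R :=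
  \sum_(k < m) \sum_(l < m) (a k l)%:R * v k * v l.

Arguments GG {R m}.

Lemma quad (R : realType) (m : nat) (a : rel 'I_m) (i j : 'I_m) (u w z : 'I_m -> R) :
  i != j -> a i i -> a j j -> a i j = a j i ->
  (forall k, k != i -> k != j -> u k = z k /\ w k = z k) ->
  (forall k, 0 <= z k) -> (forall k, 2 * z k <= u k + w k) ->
  2 * z i < u i + w i ->
  2 * GG a z < GG a u + GG a w.
Proof.
move=> ij aii ajj aij huw z0 hs hi.
rewrite -subr_gt0.
have -> : GG a u + GG a w - 2 * GG a z =
   2^-1 * (\sum_(k < m) \sum_(l < m) (a k l)%:R * ((u k + w k) * (u l + w l) - 4 * (z k * z l))
         + \sum_(k < m) \sum_(l < m) (a k l)%:R * (u k - w k) * (u l - w l)).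
  rewrite /GG mulr_sumr -!big_split -sumrB /= mulr_sumr; apply: eq_bigr => k _.
  rewrite mulr_sumr -!big_split -sumrB /= mulr_sumr; apply: eq_bigr => l _.
  by field.
apply: mulr_gt0; first by rewrite invr_gt0.
have hP (k l : 'I_m) : 0 <= (a k l)%:R * ((u k + w k) * (u l + w l) - 4 * (z k * z l)).
  apply: mulr_ge0 => //.
  have := hs k; have := hs l; have := z0 k; have := z0 l; nra.
apply: ltr_pwDl.
- rewrite (bigD1 i) //= (bigD1 i) //=.
  rewrite -addrA; apply: ltr_pwDl.
  + rewrite aii mul1r; have := z0 i; nra.
  + apply: addr_ge0; first by apply: sumr_ge0 => l _.
    by apply: sumr_ge0 => k _; apply: sumr_ge0 => l _.
- set D := fun k => u k - w k.
  have D0 k : k != i -> k != j -> D k = 0.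
    by move=> ki kj; rewrite /D; have [-> ->] := huw k ki kj; rewrite subrr.
  have -> : \sum_(k < m) \sum_(l < m) (a k l)%:R * (u k - w k) * (u l - w l)
     = \sum_(k < m) ((a k i)%:R * D k * D i + (a k j)%:R * D k * D j).
    apply: eq_bigr => k _.
    by apply: (@pair_sum R m i j (fun l => (a k l)%:R * D k * D l)) => // l li lj;
      rewrite (D0 l) // mulr0.
  rewrite (@pair_sum R m i j _ ij); last by move=> k ki kj; rewrite (D0 k) // !mulr0 !mul0r addr0.
  rewrite aii ajj -aij.
  clearbody D; case: (a i j) => /=; rewrite ?mul1r ?mul0r ?add0r ?addr0.
    have -> : D i * D i + D i * D j + (D j * D i + D j * D j) = (D i + D j) ^+ 2 by ring.
    exact: sqr_ge0.
  by rewrite addr_ge0 // -expr2 sqr_ge0.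
Qed.

Lemma no_two (R : realType) (m : nat) (a : rel 'I_m) (mu : 'I_m -> R) (al : R)
    (p : 'I_m -> R) :
  1 < al -> (forall i, a i i) -> (forall i j, a i j = a j i) ->
  (forall i, 0 < mu i) -> local_max_simplex a mu al p ->
  forall i j, i != j -> 0 < p i -> 0 < p j -> False.
Proof.
move=> a1 aii asym mu0 [[p0 p1] [eps e0 hmax]] i j ij pi pj.
have al0 : 0 < al by apply: lt_trans a1.
pose q := Num.min (Num.min (p i) (p j)) eps.
have q0 : 0 < q by rewrite !lt_min pi pj e0.
have qi : q <= p i by rewrite /q !ge_min lexx.
have qj : q <= p j by rewrite /q !ge_min lexx orbT.
have qe : q <= eps by rewrite /q ge_min lexx orbT.
pose t := q / 4.
have t0 : 0 < t by rewrite /t divr_gt0.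
have ti : t < p i by rewrite /t; lra.
have tj : t < p j by rewrite /t; lra.
have te : 2 * t ^+ 2 < eps ^+ 2 by rewrite /t; nra.
clearbody t.
pose d k : R := (i == k)%:R - (j == k)%:R.
have ji : j != i by rewrite eq_sym.
have di : d i = 1 by rewrite /d eqxx (negbTE ji) subr0.
have dj : d j = -1 by rewrite /d eqxx (negbTE ij) sub0r.
have dk k : k != i -> k != j -> d k = 0.
  by move=> ki kj; rewrite /d eq_sym (negbTE ki) eq_sym (negbTE kj) subrr.
pose xs (s : R) : 'I_m -> R := fun k => p k + s * t * d k.
have main (s : R) : (s = 1 \/ s = -1) ->
    simplex (xs s) /\ Defs.edist (xs s) p < eps.
  move=> hs.
  have ss : s * s = 1 by case: hs => ->; lra.
  rewrite /xs; split; first split.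
  - move=> k.
    have [->|ki] := eqVneq k i; first by rewrite di; case: hs => ->; lra.
    have [->|kj] := eqVneq k j; first by rewrite dj; case: hs => ->; lra.
    by rewrite dk // mulr0 addr0.
  - rewrite big_split /= p1 (@pair_sum R m i j _ ij); last first.
      by move=> k ki kj; rewrite dk // mulr0.
    by rewrite di dj; lra.
  - rewrite /Defs.edist (@pair_sum R m i j _ ij); last first.
      by move=> k ki kj; rewrite dk // mulr0 addr0 subrr expr0n.
    rewrite di dj.
    have -> : (p i + s * t * 1 - p i) ^+ 2 + (p j + s * t * -1 - p j) ^+ 2 = 2 * t ^+ 2.
      by rewrite !expr2; nra.
    by have := ltr_sqrt (2 * t ^+ 2) (exprn_gt0 2 e0); rewrite te sqrtr_sqr gtr0_norm // => ->.
have [sp ep] := main 1 (or_introl erefl).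
have [sm em] := main (-1) (or_intror erefl).
have hp := hmax _ sp ep; have hm := hmax _ sm em.
have eP y : Psi a mu al y = (2 * al)^-1 * GG a (fa mu al y) by [].
move: hp hm; rewrite !eP !ler_pM2l ?invr_gt0 ?mulr_gt0 // => hp hm.
have sti : 2 * fa mu al p i < fa mu al (xs 1) i + fa mu al (xs (-1)) i.
  rewrite /fa /xs di.
  have -> : mu i * (p i + 1 * t * 1) = mu i * p i + mu i * t by ring.
  have -> : mu i * (p i + -1 * t * 1) = mu i * p i - mu i * t by ring.
  by apply: powR_strict; rewrite ?mulr_gt0 ?ltr_pM2l.
have stj : 2 * fa mu al p j < fa mu al (xs 1) j + fa mu al (xs (-1)) j.
  rewrite /fa /xs dj addrC.
  have -> : mu j * (p j + 1 * t * -1) = mu j * p j - mu j * t by ring.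
  have -> : mu j * (p j + -1 * t * -1) = mu j * p j + mu j * t by ring.
  by apply: powR_strict; rewrite ?mulr_gt0 ?ltr_pM2l.
have := @quad R m a i j (fa mu al (xs 1)) (fa mu al (xs (-1))) (fa mu al p)
   ij (aii i) (aii j) (asym i j).
have eqk k : k != i -> k != j -> fa mu al (xs 1) k = fa mu al p k /\ fa mu al (xs (-1)) k = fa mu al p k.
  by move=> ki kj; rewrite /fa /xs dk // !mulr0 !addr0.
move=> /(_ eqk) key.
have : 2 * GG a (fa mu al p) < GG a (fa mu al (xs 1)) + GG a (fa mu al (xs (-1))).
  apply: key => //.
  - by move=> k; rewrite /fa powR_ge0.
  move=> k.
  have [->|ki] := eqVneq k i; first exact: ltW.
  have [->|kj] := eqVneq k j; first exact: ltW.
  by have [-> ->] := eqk k ki kj; lra.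
lra.
Qed.

Lemma distB0 (R : realType) (m : nat) (p : 'I_m -> R) :
  simplex p -> (forall i j, i != j -> 0 < p i -> 0 < p j -> False) -> distB p = 0.
Proof.
move=> [p0 p1] h.
have [i pi] : exists i, 0 < p i.
  apply: contrapT => hn.
  have : \sum_(k < m) p k = 0.
    apply: big1 => k _; apply/eqP; rewrite eq_le p0 andbT leNgt.
    by apply/negP => hk; apply: hn; exists k.
  by rewrite p1 => /eqP; rewrite oner_eq0.
have pk0 k : k != i -> p k = 0.
  move=> ki; apply/eqP; rewrite eq_le p0 andbT leNgt.
  by apply/negP => hk; apply: (h i k) => //; rewrite eq_sym.
have pi1 : p i = 1.
  by move: p1; rewrite (bigD1 i) //= big1 ?addr0 // => k ki; apply: pk0.
have e0 : Defs.edist p (unitvec R i) = 0.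
  rewrite /Defs.edist big1 ?sqrtr0 // => k _; rewrite /unitvec.
  have [->|ki] := eqVneq k i; first by rewrite pi1 subrr expr0n.
  by rewrite pk0 // ?mulr0n ?sub0r ?subr0 ?oppr0 expr0n.
set S := [set d | exists k : 'I_m, d = Defs.edist p (unitvec R k)].
have S0 : S 0 by exists i.
have lb : lbound S 0 by move=> y [k ->]; rewrite /Defs.edist sqrtr_ge0.
rewrite /distB -/S; apply/eqP; rewrite eq_le; apply/andP; split.
- by apply: (ge_inf _ S0); exists 0.
- by apply: lb_le_inf => //; exists 0.
Qed.

Theorem lemma4 (R : realType) (m : nat) (a : rel 'I_m) (mu : 'I_m -> R)
    (alpha : nat -> R) (pi : nat -> 'I_m -> R) :
  (1 < m)%N ->
  (forall i, a i i) ->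
  (forall i j, a i j = a j i) ->
  (forall i j, connect a i j) ->
  (forall i, 0 < mu i) ->
  (forall n, 0 < alpha n) ->
  (forall n, alpha n <= alpha n.+1) ->
  alpha n @[n --> \oo] --> +oo ->
  (forall n, PiSet a mu (alpha n) (pi n)) ->
  distB (pi n) @[n --> \oo] --> 0.
Proof.
move=> m1 aii asym conn mu0 al0 mono cvg hpi.
apply: cvg_near_cst.
have : \forall n \near \oo, 1 < alpha n by move/cvgryPgt: cvg => /(_ 1).
apply: filterS => n an.
have hl : local_max_simplex a mu (alpha n) (pi n) := hpi n.
apply: distB0; first by case: hl.
move=> i j ij pi0 pj0; exact: (@no_two _ _ _ _ _ _ an aii asym mu0 hl i j ij pi0 pj0).
Qed.
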